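(* Let $\mathcal{P}\subseteq\mathbb{Z}_{\geq0}$, working with formal power series over a commutative ring $R\supseteq\mathbb{Q}$. Then $$\Xi^{\mathrm{COMP},\mathcal{P}}(z)=F^{\mathcal{P}}(z)\ln F^{\mathcal{P}}(z).$$
   Context: $[n]=\{1,\dots,n\}$. $\mathcal{F}_n$ is the set of functions $f:[n]\to[n]$ with $|f^{-1}(x)|\in\mathcal{P}$ for all $x\in[n]$ ($\mathcal{F}_0$ = the empty function); $c(f)$ is the number of weakly connected components of the functional graph (edges $i\to f(i)$). $F^\mathcal{P}(z)=\sum_n|\mathcal{F}_n|z^n/n!$, $F^{\mathrm{COMP},\mathcal{P}}(u,z)=\sum_n\frac{z^n}{n!}\sum_{f\in\mathcal{F}_n}u^{c(f)}$, and $\Xi^{\mathrm{COMP},\mathcal{P}}(z)=\big(\partial_uF^{\mathrm{COMP},\mathcal{P}}(u,z)\big)|_{u=1}$. For a series $G$ with constant term $1$, $\ln G=\sum_{i\ge1}(1-G)^i/i\cdot(-1)^{0}$ computed as $\ln\big((1-(1-G))^{-1}\big)$ with $\ln((1-w)^{-1})=\sum_{i\ge1}w^i/i$. *)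

(* Defs.v *)
From mathcomp Require Import all_boot all_order all_algebra.
Set Implicit Arguments. Unset Strict Implicit. Unset Printing Implicit Defensive.
Import GRing.Theory.
Local Open Scope ring_scope.

(* Formal power series over R, represented by their coefficient sequences:
   s n = coefficient of z^n. *)
Definition fps (R : Type) := nat -> R.

Section FPS.
Variable R : comUnitRingType.

Definition fps_one : fps R := fun n => if n == 0%N then 1 else 0.
Definition fps_sub (a b : fps R) : fps R := fun n => a n - b n.
Definition fps_mul (a b : fps R) : fps R :=
  fun n => \sum_(i < n.+1) a i * b (n - i)%N.
Fixpoint fps_pow (a : fps R) (k : nat) : fps R :=
  if k is k'.+1 then fps_mul a (fps_pow a k') else fps_one.

(* ln G for G with constant term 1: ln G = sum_{i>=1} (-1)^(i+1) (G-1)^i / i.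
   Since G - 1 has zero constant term, (G-1)^i has no terms of degree < i,
   so the coefficient of z^n only involves i = 1..n (exact, not a truncation). *)
Definition fps_ln (G : fps R) : fps R :=
  fun n => \sum_(1 <= i < n.+1)
             (-1) ^+ i.+1 * (i%:R)^-1 * fps_pow (fps_sub G fps_one) i n.
End FPS.

(* The functional graph of f : 'I_n -> 'I_n, edges i -> f i, as a symmetric
   relation (for weak connectivity). *)
Definition fgraph_sym (n : nat) (f : {ffun 'I_n -> 'I_n}) : rel 'I_n :=
  fun x y => (f x == y) || (f y == x).

Definition ncomp (n : nat) (f : {ffun 'I_n -> 'I_n}) : nat :=
  n_comp (fgraph_sym f) 'I_n.

Definition inF (P : pred nat) (n : nat) (f : {ffun 'I_n -> 'I_n}) : bool :=
  [forall x : 'I_n, P #|[set y | f y == x]|].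

Definition FP (R : comUnitRingType) (P : pred nat) : fps R :=
  fun n => #|[set f : {ffun 'I_n -> 'I_n} | inF P f]|%:R * ((n`!)%:R)^-1.

(* F^{COMP,P}(u,z) = sum_n z^n/n! sum_{f in F_n} u^{c(f)}; coefficient of z^n
   is a polynomial in u. *)
Definition FCOMP (R : comUnitRingType) (P : pred nat) : nat -> {poly R} :=
  fun n => ((n`!)%:R)^-1 *: \sum_(f : {ffun 'I_n -> 'I_n} | inF P f) 'X^(ncomp f).

Definition XiCOMP (R : comUnitRingType) (P : pred nat) : fps R :=
  fun n => (FCOMP R P n)^`().[1].

(* Main.v *)
Require Import Defs.
From mathcomp Require Import all_boot all_order all_algebra.
From mathcomp Require Import zify ring.
From Stdlib Require Import FunctionalExtensionality.
Set Implicit Arguments. Unset Strict Implicit. Unset Printing Implicit Defensive.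

Section Hom.
Lemma hom_connect (U V : finType) (e1 : rel U) (e2 : rel V) (A : pred U) (m : U -> V) :
  (forall x y, A x -> e1 x y -> A y && e2 (m x) (m y)) ->
  forall x y, A x -> connect e1 x y -> connect e2 (m x) (m y).
Proof.
move=> H x y Ax /connectP[p pth ->].
elim: p x Ax pth => [|z p IH] x Ax /=; first by rewrite connect0.
case/andP=> exz pth; case/andP: (H _ _ Ax exz) => Az e2xz.
exact: connect_trans (connect1 e2xz) (IH z Az pth).
Qed.
End Hom.

Section Comb.
Variable P : pred nat.
Variable T : finType.
Implicit Types (f g h : {ffun T -> T}) (S : {set T}).

Definition fsym f : rel T := fun x y => (f x == y) || (f y == x).
Definition comp f x : {set T} := [set y | connect (fsym f) x y].
Definition good f := [forall x, P #|[set y | f y == x]|].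
Definition ext S g := [forall x, if x \in S then g x \in S else g x == x].
Definition goodon S g := [forall x in S, P #|[set y in S | g y == x]|].
Definition connon S g := [forall x in S, forall y in S, connect (fsym g) x y].
Definition glue S g h : {ffun T -> T} := [ffun x => if x \in S then g x else h x].
Definition restr S f : {ffun T -> T} := [ffun x => if x \in S then f x else x].

Lemma fsym_sym f : symmetric (fsym f).
Proof. by move=> x y; rewrite /fsym orbC. Qed.

Lemma fsym_csym f : connect_sym (fsym f).
Proof. exact/sym_connect_sym/fsym_sym. Qed.

Lemma extP S g x : ext S g -> if x \in S then g x \in S else g x == x.
Proof. by move/forallP. Qed.

Lemma ext_in S g x : ext S g -> x \in S -> g x \in S.
Proof. by move/(extP x) => + xS; rewrite xS. Qed.

Lemma ext_out S g x : ext S g -> x \notin S -> g x = x.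
Proof. by move/(extP x) => + xS; rewrite (negbTE xS) => /eqP. Qed.

Section Glue.
Variables (S : {set T}) (g h : {ffun T -> T}).
Hypotheses (eg : ext S g) (eh : ext (~: S) h).
Let f := glue S g h.

Lemma glue_in x : x \in S -> f x = g x.
Proof. by rewrite /f ffunE => ->. Qed.
Lemma glue_out x : x \notin S -> f x = h x.
Proof. by rewrite /f ffunE => /negbTE ->. Qed.
Lemma glue_S x : (f x \in S) = (x \in S).
Proof.
case xS: (x \in S); first by rewrite glue_in ?xS // ext_in.
rewrite glue_out ?xS //.
have : h x \in ~: S by apply: ext_in eh _; rewrite inE xS.
by rewrite inE => /negbTE.
Qed.

Lemma glue_closed : closed (fsym f) S.
Proof.
move=> x y; rewrite /fsym; case/orP=> /eqP <-; by rewrite glue_S.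
Qed.

Lemma glue_good : good f = goodon S g && goodon (~: S) h.
Proof.
have fib x : [set y | f y == x] =
   if x \in S then [set y in S | g y == x] else [set y in ~: S | h y == x].
  apply/setP => y; case xS: (x \in S); case yS: (y \in S); rewrite !inE ?yS /=.
  - by rewrite glue_in ?yS.
  - by apply/negbTE; apply: contraFN yS => /eqP E; rewrite -(glue_S y) E.
  - by apply/negbTE; apply: contraTN yS => /eqP E; rewrite -(glue_S y) E xS.
  - by rewrite glue_out ?yS.
apply/forallP/andP => [H|[/forall_inP H1 /forall_inP H2] x].
  split; apply/forall_inP => x xS; move: (H x); rewrite fib.
    by rewrite xS.
  by move: xS; rewrite inE => /negbTE ->.
rewrite fib; case: ifP => xS; first exact: H1.
by apply: H2; rewrite inE xS.
Qed.

Lemma glue_comp x0 : x0 \in S -> (comp f x0 == S) = connon S g.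
Proof.
move=> x0S; apply/eqP/idP => [Hc|Hc].
  apply/forall_inP => x xS; apply/forall_inP => y yS.
  have cx : connect (fsym f) x0 x by move: xS; rewrite -Hc inE.
  have cy : connect (fsym f) x0 y by move: yS; rewrite -Hc inE.
  have cxy : connect (fsym f) x y.
    by apply: connect_trans cy; rewrite fsym_csym.
  apply: (@hom_connect _ _ (fsym f) (fsym g) (mem S) id _ x y xS cxy).
  move=> u v /= uS euv.
  have vS : v \in S by rewrite -(glue_closed euv).
  by rewrite vS /= /fsym -!glue_in.
apply/setP => y; rewrite inE; apply/idP/idP => [cy|yS].
  by rewrite -(closed_connect glue_closed cy).
have cg : connect (fsym g) x0 y by move/forall_inP: Hc => /(_ x0 x0S)/forall_inP; apply.
apply: (@hom_connect _ _ (fsym g) (fsym f) (mem S) id _ x0 y x0S cg).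
move=> u v /= uS; rewrite /fsym; case/orP => /eqP E.
  by rewrite -E ext_in //= glue_in // E eqxx.
have vS : v \in S.
  apply: contraT => vS; move: uS; rewrite -E (ext_out eg) //.
  by move/negbTE: vS => ->.
by rewrite vS /= !glue_in // E eqxx orbT.
Qed.

End Glue.


Section Decomp.
Variables (S : {set T}) (x0 : T) (f : {ffun T -> T}).
Hypotheses (x0S : x0 \in S) (Hc : comp f x0 = S).

Lemma dec_closed : closed (fsym f) S.
Proof.
move=> x y exy.
have := connect_closed (fsym_csym f) x0 exy.
by rewrite -Hc !inE.
Qed.

Lemma dec_fS x : (f x \in S) = (x \in S).
Proof. by apply/esym; apply: dec_closed; rewrite /fsym eqxx. Qed.

Lemma dec_ext1 : ext S (restr S f).
Proof. by apply/forallP => x; rewrite ffunE; case xS: (x \in S); rewrite /= ?dec_fS ?xS. Qed.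

Lemma dec_ext2 : ext (~: S) (restr (~: S) f).
Proof. by apply/forallP => x; rewrite ffunE !inE; case xS: (x \in S); rewrite /= ?dec_fS ?xS. Qed.

Lemma dec_glue : glue S (restr S f) (restr (~: S) f) = f.
Proof. by apply/ffunP => x; rewrite !ffunE inE; case: (x \in S). Qed.
End Decomp.

Definition Gset S := [set g | [&& ext S g, goodon S g & connon S g]].
Definition Hset S := [set h | ext S h && goodon S h].

Lemma core_count S x0 : x0 \in S ->
  #|[set f | good f && (comp f x0 == S)]| = #|Gset S| * #|Hset (~: S)|.
Proof.
move=> x0S; rewrite -cardsX.
have -> : [set f | good f && (comp f x0 == S)] =
   [set glue S gh.1 gh.2 | gh in setX (Gset S) (Hset (~: S))].
  apply/setP => f; rewrite inE; apply/andP/imsetP => [[gf /eqP cf]|[[g h]]].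
    exists (restr S f, restr (~: S) f); last by rewrite dec_glue.
    have e1 := dec_ext1 cf; have e2 := dec_ext2 cf.
    move: gf; rewrite -{1}(@dec_glue S f) glue_good // => /andP[g1 g2].
    rewrite !inE /= e1 e2 g1 g2 /= -(glue_comp e1 e2 x0S) dec_glue.
    by rewrite cf eqxx.
  rewrite !inE /= => /andP[/and3P[e1 g1 c1] /andP[e2 g2]] ->.
  by rewrite glue_good // g1 g2 glue_comp.
apply: card_in_imset => [[g h] [g' h']]; rewrite !inE /=.
move=> /andP[/and3P[e1 _ _] /andP[e2 _]] /andP[/and3P[e1' _ _] /andP[e2' _]] E.
have E' x := congr1 (fun k : {ffun T -> T} => k x) E.
congr pair; apply/ffunP => x; case xS: (x \in S).
- by move: (E' x); rewrite /= !glue_in.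
- by rewrite (ext_out e1) ?xS // (ext_out e1') ?xS.
- by rewrite (ext_out e2) ?inE ?xS // (ext_out e2') ?inE ?xS.
- by move: (E' x); rewrite /= !glue_out ?xS.
Qed.

End Comb.

Section Relabel.
Variable P : pred nat.
Variable T : finType.
Variables (S : {set T}) (x0 : T) (x0S : x0 \in S).

Definition connall (U : finType) (u : {ffun U -> U}) := [forall x, forall y, connect (fsym u) x y].

Let sg (i : 'I_#|S|) : T := enum_val i.
Let ps (x : T) : 'I_#|S| := enum_rank_in x0S x.
Lemma sgP i : sg i \in S. Proof. exact: enum_valP. Qed.
Lemma psK x : x \in S -> sg (ps x) = x. Proof. exact: enum_rankK_in. Qed.
Lemma sgK i : ps (sg i) = i. Proof. exact: enum_valK_in. Qed.
Lemma sg_inj : injective sg. Proof. exact: can_inj sgK. Qed.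

Definition Phi (u : {ffun 'I_#|S| -> 'I_#|S|}) : {ffun T -> T} :=
  [ffun x => if x \in S then sg (u (ps x)) else x].
Definition Psi (g : {ffun T -> T}) : {ffun 'I_#|S| -> 'I_#|S|} :=
  [ffun i => ps (g (sg i))].

Lemma Phi_in u x : x \in S -> Phi u x = sg (u (ps x)).
Proof. by rewrite ffunE => ->. Qed.
Lemma Phi_out u x : x \notin S -> Phi u x = x.
Proof. by rewrite ffunE => /negbTE ->. Qed.
Lemma Phi_sg u i : Phi u (sg i) = sg (u i).
Proof. by rewrite Phi_in ?sgP // sgK. Qed.
Lemma Phi_ext u : ext S (Phi u).
Proof. apply/forallP => x; case: ifP => xS; first by rewrite Phi_in ?sgP.
by rewrite Phi_out ?xS. Qed.
Lemma PsiK : cancel Phi Psi.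
Proof. by move=> u; apply/ffunP => i; rewrite ffunE Phi_sg sgK. Qed.
Lemma PhiK g : ext S g -> Phi (Psi g) = g.
Proof.
move=> eg; apply/ffunP => x; case xS: (x \in S).
  by rewrite Phi_in // ffunE psK // psK // ext_in.
by rewrite Phi_out ?xS // (ext_out eg) ?xS.
Qed.

Lemma Phi_fib u i : #|[set y in S | Phi u y == sg i]| = #|[set j | u j == i]|.
Proof.
rewrite -(card_imset _ sg_inj); apply: eq_card => y; rewrite !inE.
apply/andP/imsetP => [[yS /eqP E]|[j]].
  exists (ps y); last by rewrite psK.
  by rewrite inE; move: E; rewrite Phi_in // => /sg_inj ->.
by rewrite inE => /eqP <- ->; rewrite sgP Phi_sg.
Qed.

Lemma Phi_good u : goodon P S (Phi u) = good P u.
Proof.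
apply/forall_inP/forallP => [H i|H x xS].
  rewrite -Phi_fib; exact: (H _ (sgP i)).
by rewrite -(psK xS) Phi_fib.
Qed.

Lemma Phi_conn u : connon S (Phi u) = connall u.
Proof.
apply/forall_inP/forallP => [H i|H x xS].
  apply/forallP => j; rewrite -(sgK i) -(sgK j).
  move/forall_inP: (H _ (sgP i)) => /(_ _ (sgP j)).
  apply: (@hom_connect _ _ _ _ (mem S) ps _ _ _ (sgP i)) => x y /= xS.
  rewrite /fsym; case/orP => /eqP E.
    by rewrite -E Phi_in // sgP sgK eqxx.
  have yS : y \in S.
    by apply: contraT => yS; move: xS; rewrite -E Phi_out // (negbTE yS).
  by rewrite yS -E Phi_in // sgK eqxx orbT.
apply/forall_inP => y yS; rewrite -(psK xS) -(psK yS).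
move/forallP: (H (ps x)) => /(_ (ps y)).
apply: (@hom_connect _ _ _ _ predT sg _ _ _ isT) => i j _ /=.
by rewrite /fsym !Phi_sg !(inj_eq sg_inj).
Qed.

Lemma Hset_card : #|Hset P S| = #|[set u : {ffun 'I_#|S| -> 'I_#|S|} | good P u]|.
Proof.
rewrite -(card_imset _ (can_inj PsiK)); apply: eq_card => g; rewrite !inE.
apply/andP/imsetP => [[eg gg]|[u]].
  by exists (Psi g); rewrite ?inE -?Phi_good PhiK.
by rewrite inE => gu ->; rewrite Phi_ext Phi_good.
Qed.

Lemma Gset_card : #|Gset P S| = #|[set u : {ffun 'I_#|S| -> 'I_#|S|} | good P u && connall u]|.
Proof.
rewrite -(card_imset _ (can_inj PsiK)); apply: eq_card => g; rewrite !inE.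
apply/and3P/imsetP => [[eg gg cg]|[u]].
  by exists (Psi g); rewrite ?inE -?Phi_good -?Phi_conn PhiK ?gg.
by rewrite inE => /andP[gu cu] ->; rewrite Phi_ext Phi_good Phi_conn.
Qed.
End Relabel.

Section Sums.
Variable P : pred nat.
Definition acnt k := #|[set u : {ffun 'I_k -> 'I_k} | good P u]|.
Definition ccnt k := #|[set u : {ffun 'I_k -> 'I_k} | good P u && connall u]|.

Variable T : finType.

Lemma Hcard (S : {set T}) : #|Hset P S| = acnt #|S|.
Proof.
case: (set_0Vmem S) => [->|[x0 x0S]]; last by rewrite (Hset_card P x0S).
rewrite cards0 /acnt.
have -> : [set u : {ffun 'I_0 -> 'I_0} | good P u] = setT.
  by apply/setP => u; rewrite !inE; apply/forallP => -[].
rewrite cardsT card_ffun card_ord expn0.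
apply/eqP/cards1P; exists [ffun x => x]; apply/setP => g; rewrite !inE.
apply/andP/eqP => [[eg _]|->].
  by apply/ffunP => x; rewrite ffunE (ext_out eg) // inE.
split; first by apply/forallP => x; rewrite inE ffunE.
by apply/forall_inP => x; rewrite inE.
Qed.

Lemma core2 (S : {set T}) x0 : x0 \in S ->
  #|[set f | good P f && (comp f x0 == S)]| = ccnt #|S| * acnt (#|T| - #|S|).
Proof.
move=> x0S; rewrite (core_count P x0S) (Gset_card P x0S) Hcard; congr (_ * _).
by rewrite [in #|T| - _](cardsCs S) subKn // max_card.
Qed.

Lemma sum_decomp (w : T -> {set T} -> nat) :
  \sum_(f | good P f) \sum_x w x (comp f x) =
  \sum_(S : {set T}) ccnt #|S| * acnt (#|T| - #|S|) * \sum_(x in S) w x S.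
Proof.
rewrite exchange_big /=.
transitivity (\sum_x \sum_(S : {set T}) (x \in S) * (ccnt #|S| * acnt (#|T| - #|S|) * w x S)).
  apply: eq_bigr => x _.
  rewrite (partition_big (fun f => comp f x) predT) //=.
  apply: eq_bigr => S _.
  rewrite (eq_bigr (fun _ => w x S)); last by move=> f /andP[_ /eqP ->].
  rewrite (eq_bigl (fun f => f \in [set f | good P f && (comp f x == S)])); last first.
    by move=> f; rewrite inE.
  rewrite sum_nat_const; case xS: (x \in S).
    by rewrite core2 // mul1n.
  rewrite mul0n; apply/eqP; rewrite muln_eq0; apply/orP; left.
  apply/eqP/eq_card0 => f; rewrite inE; apply/negbTE.
  apply/nandP; right; apply: contraFN xS => /eqP <-.
  by rewrite inE connect0.
rewrite exchange_big /=; apply: eq_bigr => S _.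
rewrite big_distrr /= [in RHS]big_mkcond /=; apply: eq_bigr => x _.
by case: (x \in S); rewrite ?mul1n ?mul0n ?muln0.
Qed.

Lemma sum_card (g : nat -> nat) :
  \sum_(S : {set T}) g #|S| = \sum_(k < #|T|.+1) 'C(#|T|, k) * g k.
Proof.
transitivity (\sum_(S : {set T}) \sum_(k < #|T|.+1) (#|S| == k) * g k).
  apply: eq_bigr => S _.
  have lt : #|S| < #|T|.+1 by rewrite ltnS max_card.
  rewrite (bigD1 (Ordinal lt)) //= eqxx mul1n big1 ?addn0 // => k.
  case: (eqVneq #|S| k) => [E|]; last by rewrite mul0n.
  by move/eqP; case; apply: val_inj; rewrite /= E.
rewrite exchange_big /=; apply: eq_bigr => k _.
rewrite -big_distrl /=; congr (_ * _); apply: etrans (card_draws T k).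
rewrite -(sum1_card (mem [set A : {set T} | #|A| == k])) [RHS]big_mkcond /=; apply: eq_bigr => S _.
by rewrite inE; case: (#|S| == k).
Qed.

Lemma roots_w (f : {ffun T -> T}) x :
  roots (fsym f) x = (odflt x [pick y in comp f x] == x).
Proof.
rewrite /roots /root; congr (odflt x _ == x); apply: eq_pick => y.
by rewrite !inE.
Qed.

Lemma ncomp_sum (f : {ffun T -> T}) :
  n_comp (fsym f) T = \sum_x (odflt x [pick y in comp f x] == x).
Proof.
rewrite /n_comp_mem -sum1_card big_mkcond /=; apply: eq_bigr => x _.
by rewrite !inE andbT roots_w; case: (_ == _).
Qed.

Lemma pick_sum (S : {set T}) :
  \sum_(x in S) (odflt x [pick y in S] == x) = (S != set0).
Proof.
case: (set_0Vmem S) => [->|[y yS]].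
  by rewrite eqxx big_pred0 // => x; rewrite inE.
have -> : S != set0 by apply/set0Pn; exists y.
case: pickP => [z zS|/(_ y)]; last by rewrite yS.
rewrite (bigD1 z) //= eqxx big1 // => x /andP[_ ne].
by rewrite eq_sym (negbTE ne).
Qed.

Lemma identA :
  \sum_(f | good P f) n_comp (fsym f) T =
  \sum_(k < #|T|.+1) 'C(#|T|, k) * (ccnt k * acnt (#|T| - k) * (0 < k)).
Proof.
rewrite (eq_bigr _ (fun f _ => ncomp_sum f)) (sum_decomp (fun x S => nat_of_bool (odflt x [pick y in S] == x))).
rewrite -(sum_card (fun k => ccnt k * acnt (#|T| - k) * (0 < k))).
apply: eq_bigr => S _; rewrite pick_sum; congr (_ * _).
by rewrite card_gt0.
Qed.

Lemma identB :
  #|T| * #|[set f : {ffun T -> T} | good P f]| =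
  \sum_(k < #|T|.+1) 'C(#|T|, k) * (ccnt k * acnt (#|T| - k) * k).
Proof.
rewrite -(sum_card (fun k => ccnt k * acnt (#|T| - k) * k)).
have := sum_decomp (fun _ _ => 1); rewrite /=.
under eq_bigr do rewrite sum1_card.
under [in X in _ = X -> _]eq_bigr do rewrite sum1_card.
move=> <-; rewrite mulnC (eq_bigl (mem [set f : {ffun T -> T} | good P f])).
  by rewrite sum_nat_const.
by move=> f; rewrite /= inE.
Qed.
End Sums.

Import GRing.Theory.
Local Open Scope ring_scope.

Section Alg.
Variable R : comUnitRingType.
Hypothesis HQ : forall n : nat, (n.+1)%:R \is a @GRing.unit R.

Lemma unit_pos (m : nat) : (0 < m)%N -> m%:R \is a @GRing.unit R.
Proof. by case: m. Qed.

Lemma coef_pow0 (p : {poly R}) k m : p`_0 = 0 -> (m < k)%N -> (p ^+ k)`_m = 0.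
Proof.
move=> p0; elim: k m => [//|k IH] m lt.
rewrite exprS coefM big1 // => [[j /= lj]] _.
case: j lj => [|j] lj; first by rewrite p0 mul0r.
by rewrite IH ?mulr0 //; lia.
Qed.

Lemma bridge (G : fps R) (p : {poly R}) n :
  (forall j, (j <= n)%N -> p`_j = G j) ->
  forall k j, (j <= n)%N -> (p ^+ k)`_j = fps_pow G k j.
Proof.
move=> Hp; elim=> [|k IH] j jn /=.
  by rewrite expr0 coef1 /fps_one; case: (j == 0%N).
rewrite exprS coefM /fps_mul; apply: eq_bigr => -[i /= li] _.
rewrite Hp ?IH //; first by rewrite (leq_trans (leq_subr _ _)).
by rewrite (leq_trans _ jn) // -ltnS.
Qed.

Lemma geom (x : {poly R}) n : (1 - x) * \sum_(i < n) x ^+ i = 1 - x ^+ n.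
Proof. by rewrite -[1 - x]opprB mulNr -subrX1 opprB. Qed.

Lemma coefXD (p : {poly R}) k : ('X * p^`())`_k = k%:R * p`_k.
Proof.
rewrite coefXM; case: k => [|k] /=; first by rewrite mul0r.
by rewrite coef_deriv mulr_natl.
Qed.

Lemma ln_ident (G : fps R) n : G 0%N = 1 ->
  n%:R * G n = \sum_(k < n.+1) (k%:R * fps_ln G k) * G (n - k)%N.
Proof.
move=> G0.
pose g : {poly R} := \poly_(i < n.+1) G i.
pose h := g - 1.
pose c (i : nat) : R := (-1) ^+ i.+2 * (i.+1)%:R^-1.
pose l := \sum_(i < n) c i *: h ^+ i.+1.
have gE j : (j <= n)%N -> g`_j = G j by move=> jn; rewrite coef_poly ltnS jn.
have hE j : (j <= n)%N -> h`_j = fps_sub G (fps_one R) j.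
  by move=> jn; rewrite coefB gE // coef1 /fps_sub /fps_one; case: (j == 0%N).
have h0 : h`_0 = 0 by rewrite hE // /fps_sub /fps_one G0 subrr.
have lE m : (m <= n)%N -> l`_m = fps_ln G m.
  move=> mn; rewrite /fps_ln big_add1 /= big_mkord (big_ord_widen n (fun i => (-1) ^+ i.+2 / i.+1%:R * fps_pow (fps_sub G (fps_one R)) i.+1 m) mn).
  rewrite /l coef_sum [RHS]big_mkcond /=; apply: eq_bigr => i _.
  rewrite coefZ; case: ifP => im.
    by rewrite (bridge hE) // /c mulrA.
  by rewrite coef_pow0 ?mulr0 // ltnS leqNgt im.
have dl : l^`() = h^`() * \sum_(i < n) (- h) ^+ i.
  rewrite raddf_sum mulr_sumr; apply: eq_bigr => i _.
  change (deriv (c i *: h ^+ i.+1) = h^`() * (- h) ^+ i).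
  have ci : c i *+ i.+1 = (-1) ^+ i.
    by rewrite /c /= -[X in X = _]mulr_natr mulrVK ?HQ // !exprS !mulN1r opprK.
  rewrite derivZ deriv_exp /= -scalerMnr scalerMnl ci.
  by rewrite -mul_polyC rmorphXn /= polyCN polyC1 [in RHS]exprNn mulrCA.
have gl : g * l^`() = h^`() * (1 - (- h) ^+ n).
  have gh : g = 1 - (- h) by rewrite opprK /h addrC subrK.
  by rewrite dl mulrCA -geom -gh.
transitivity (('X * l^`() * g)`_n); last first.
  rewrite coefM; apply: eq_bigr => -[k /= lk] _.
  have kn : (k <= n)%N by rewrite -ltnS.
  by rewrite coefXD (lE _ kn) (gE _ (leq_subr _ _)).
rewrite -mulrA [l^`() * g]mulrC gl coefXM.
case: (posnP n) => [n0|npos]; first by rewrite n0 mul0r.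
rewrite mulrBr mulr1 coefB [_ * _ ^+ n]mulrC.
rewrite [X in _ - X]coefM big1 ?subr0; last first.
  move=> -[j /= lj] _; rewrite coef_pow0 ?mul0r //; first by rewrite coefN h0 oppr0.
  by rewrite (leq_trans lj) // prednK.
rewrite coef_deriv prednK // hE // /fps_sub /fps_one.
by rewrite (negbTE (lt0n_neq0 npos)) subr0 mulr_natl.
Qed.
End Alg.

Section Final.
Variable R : comUnitRingType.
Hypothesis HQ : forall n : nat, (n.+1)%:R \is a @GRing.unit R.
Variable P : pred nat.

Lemma fact_unit m : (m`!)%:R \is a @GRing.unit R.
Proof. exact: (unit_pos HQ (fact_gt0 m)). Qed.

Lemma acnt0 : acnt P 0 = 1%N.
Proof.
rewrite /acnt.
have -> : [set u : {ffun 'I_0 -> 'I_0} | good P u] = setT.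
  by apply/setP => u; rewrite !inE; apply/forallP => -[].
by rewrite cardsT card_ffun card_ord expn0.
Qed.

Lemma FPE m : FP R P m = (acnt P m)%:R / (m`!)%:R.
Proof. by []. Qed.

Lemma FP0 : FP R P 0 = 1.
Proof. by rewrite FPE acnt0 fact0 invr1 mulr1. Qed.

Definition Cs (n : nat) : R := if n is 0 then 0 else (ccnt P n)%:R / (n`!)%:R.

Lemma binv n k : (k <= n)%N ->
  'C(n, k)%:R / (n`!)%:R = ((k`!)%:R)^-1 * (((n - k)`!)%:R)^-1 :> R.
Proof.
move=> kn; rewrite -(bin_fact kn) !natrM.
have uC : 'C(n, k)%:R \is a @GRing.unit R by apply: (unit_pos HQ); rewrite bin_gt0.
rewrite invrM ?unitrM ?fact_unit // invrM ?fact_unit //.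
by rewrite mulrCA divrr // mulr1 mulrC.
Qed.


Lemma L1 n : XiCOMP R P n = fps_mul Cs (FP R P) n.
Proof.
rewrite /XiCOMP /FCOMP derivZ hornerZ raddf_sum horner_sum.
rewrite (eq_bigr (fun f => (ncomp f)%:R)); last first.
  move=> f _; change ((('X^(ncomp f))^`()).[1] = (ncomp f)%:R :> R).
  by rewrite derivXn hornerMn hornerXn expr1n.
rewrite -natr_sum.
have E : (\sum_(f : {ffun 'I_n -> 'I_n} | inF P f) ncomp f =
   \sum_(k < n.+1) 'C(n, k) * (ccnt P k * acnt P (n - k) * (0 < k)))%N.
  by have := identA P ('I_n); rewrite card_ord.
rewrite E natr_sum mulr_sumr /fps_mul; apply: eq_bigr => -[k /= lk] _.
case: k lk => [|k] lk; first by rewrite !muln0 mulr0 mul0r.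
rewrite muln1 !natrM FPE mulrA [_^-1 * _]mulrC (binv (n:=n) (k:=k.+1)) //=.
ring.
Qed.

Lemma L2 n : n%:R * FP R P n = \sum_(k < n.+1) (k%:R * Cs k) * FP R P (n - k)%N.
Proof.
have E : (n * acnt P n = \sum_(k < n.+1) 'C(n, k) * (ccnt P k * acnt P (n - k) * k))%N.
  by have := identB P ('I_n); rewrite card_ord.
rewrite FPE mulrA -natrM E natr_sum mulr_suml; apply: eq_bigr => -[k /= lk] _.
case: k lk => [|k] lk; first by rewrite !muln0 !mul0r.
rewrite !natrM FPE /Cs.
have B := binv (n:=n) (k:=k.+1) lk.
transitivity ('C(n, k.+1)%:R / n`!%:R * ((ccnt P k.+1)%:R * (acnt P (n - k.+1))%:R * k.+1%:R) : R).
  by ring.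
rewrite B; ring.
Qed.

Lemma Cs_ln : Cs =1 fps_ln (FP R P).
Proof.
pose F := FP R P; pose L := fps_ln F.
have hL n := ln_ident HQ n FP0.
pose D k := k%:R * (Cs k - L k).
have HD n : \sum_(k < n.+1) D k * F (n - k)%N = 0.
  rewrite /D (eq_bigr (fun k : 'I_n.+1 => k%:R * Cs k * F (n - k)%N - k%:R * L k * F (n - k)%N)).
    by rewrite sumrB -L2 -hL subrr.
  by move=> k _; rewrite mulrBr mulrBl.
have D0 n : D n = 0.
  elim/ltn_ind: n => n IH.
  have := HD n; rewrite big_ord_recr /= big1 ?add0r ?subnn.
    by rewrite /F FP0 mulr1.
  by move=> -[k /= lk] _; rewrite IH ?mul0r.
case=> [|n]; first by rewrite /fps_ln big_geq.
have := D0 n.+1; rewrite /D => /(congr1 (fun x => (n.+1%:R)^-1 * x)).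
by rewrite mulKr ?HQ // mulr0 => /eqP; rewrite subr_eq0 => /eqP.
Qed.

Lemma fps_mulC (a b : fps R) n : fps_mul a b n = fps_mul b a n.
Proof.
rewrite /fps_mul (reindex_inj rev_ord_inj) /=; apply: eq_bigr => -[i /= li] _.
have iln : (i <= n)%N by rewrite -ltnS.
by rewrite subSS subKn // mulrC.
Qed.

Theorem main : XiCOMP R P = fps_mul (FP R P) (fps_ln (FP R P)).
Proof.
apply: functional_extensionality => n.
rewrite L1 fps_mulC /fps_mul; apply: eq_bigr => i _.
by rewrite Cs_ln.
Qed.
End Final.


Theorem theorem5p8 (R : comUnitRingType)
  (HQ : forall n : nat, (n.+1)%:R \is a @GRing.unit R)
  (P : pred nat) :
  XiCOMP R P = fps_mul (FP R P) (fps_ln (FP R P)).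
Proof. exact: (@main R HQ P). Qed.
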